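(* Let $N\ge3$ and $1\le k\le N-1$ be integers with $\gcd(N,k)=1$, and let $p$ be an odd prime with $p\equiv\pm1$ or $0\pmod N$. Let $\tau$ lie in the upper half-plane, $q=e^{2\pi i\tau}$, and $q_j=e^{2\pi i(\tau+j)/p}$ for $j=0,\dots,p-1$. Then \[\left(1+\chi_{-N}(p)p^2\right)J_{N\tau}(q^k)=\sum_{j=0}^{p-1}p\,J_{\frac{N(\tau+j)}{p}}(q_j^k)+\chi_{-N}(p)\,J_{Np\tau}(q^{pk}).\]
   Context: Let $J(z)=\log|z|\log|1-z|$ and $B_3(x)=x^3-\frac32x^2+\frac12x$. For $\sigma$ in the upper half-plane, with $Q=e^{2\pi i\sigma}$, and $z\in\mathbb{C}^*$ not in $Q^{\mathbb{Z}}$, define \[J_\sigma(z)=\sum_{n=0}^\infty J(zQ^n)-\sum_{n=1}^\infty J(z^{-1}Q^n)+\frac13\log^2|Q|\,B_3\!\left(\frac{\log|z|}{\log|Q|}\right).\] Here $\chi_{-N}(p)$ equals $1$ if $p\equiv1\pmod N$, $-1$ if $p\equiv-1\pmod N$, and $0$ if $p\equiv0\pmod N$. *)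

(* Defs.v *)
From Stdlib Require Import Reals ZArith Znumtheory Arith.
From Coquelicot Require Export Coquelicot.
Open Scope R_scope.

Definition cexp (w : C) : C :=
  (exp (fst w) * cos (snd w), exp (fst w) * sin (snd w)).

Fixpoint cpow (z : C) (n : nat) : C :=
  match n with O => RtoC 1 | S m => Cmult z (cpow z m) end.

Definition Jfun (z : C) : R := ln (Cmod z) * ln (Cmod (Cminus (RtoC 1) z)).

Definition B3 (x : R) : R := x ^ 3 - 3 / 2 * x ^ 2 + 1 / 2 * x.

Definition Qof (sigma : C) : C := cexp (Cmult (RtoC (2 * PI)) (Cmult Ci sigma)).

Definition Jsigma (sigma z : C) : R :=
  let Q := Qof sigma in
  Series (fun n => Jfun (Cmult z (cpow Q n)))
  - Series (fun n => Jfun (Cmult (Cinv z) (cpow Q (S n))))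
  + 1 / 3 * (ln (Cmod Q)) ^ 2 * B3 (ln (Cmod z) / ln (Cmod Q)).

Definition chiN (N p : nat) : R :=
  if Nat.eqb (Nat.modulo p N) 1 then 1
  else if Nat.eqb (Nat.modulo p N) (N - 1) then -1
  else 0.

(* Main.v *)
Require Import Defs.
From Stdlib Require Import Reals ZArith Znumtheory Arith Lia Lra FunctionalExtensionality.
From Coquelicot Require Import Coquelicot.
From HB Require Import structures.
From mathcomp Require ssreflect ssrfun ssrbool eqtype ssrnat seq choice fintype bigop ssralg poly Rstruct.
Open Scope R_scope.

Fixpoint cprod (f : nat -> C) (n : nat) : C :=
  match n with O => RtoC 1 | S m => Cmult (cprod f m) (f m) end.

Module MC.
Import ssreflect ssrfun ssrbool eqtype ssrnat seq choice fintype bigop ssralg poly Rstruct.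
Import GRing.Theory.
Local Open Scope ring_scope.
Definition CC : Type := C.
HB.instance Definition _ := Choice.copy CC (R*R)%type.
Lemma CplusA : associative (Cplus : CC -> CC -> CC). Proof. move=> *; by rewrite Cplus_assoc. Qed.
Lemma Cplus_opp_l' (x : CC) : Cplus (Copp x) x = RtoC R0.
Proof. by rewrite Cplus_comm Cplus_opp_r. Qed.
HB.instance Definition _ := GRing.isZmodule.Build CC CplusA Cplus_comm Cplus_0_l Cplus_opp_l'.
Lemma CmultA : associative (Cmult : CC -> CC -> CC). Proof. move=> *; by rewrite Cmult_assoc. Qed.
Lemma C1_neq0 : (RtoC R1 : CC) != RtoC R0.
Proof. apply/eqP => H. injection H. exact: R1_neq_R0. Qed.
HB.instance Definition _ := GRing.Zmodule_isComNzRing.Build CC CmultA Cmult_comm Cmult_1_l Cmult_plus_distr_r C1_neq0.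
Lemma CmulVf (x : CC) : x != 0 -> Cmult (Cinv x) x = RtoC R1.
Proof. move/eqP => H. exact: Cinv_l. Qed.
Lemma Cinv0 : Cinv (RtoC R0 : CC) = RtoC R0.
Proof. rewrite /Cinv /=. apply: injective_projections => /=; rewrite /Rdiv; ring. Qed.
HB.instance Definition _ := GRing.ComNzRing_isField.Build CC CmulVf Cinv0.

Lemma prod_sub (z y : CC) n : n.-primitive_root z ->
  \prod_(0 <= i < n) (1 - y * z ^+ i) = 1 - y ^+ n.
Proof.
move=> pz.
have n0 : (0 < n)%N := prim_order_gt0 pz.
have [->|y0] := eqVneq y 0.
  rewrite expr0n. have -> : (n == 0%N) = false by case: n n0 pz.
  rewrite subr0. by rewrite big1 // => i _; rewrite mul0r subr0.
have := factor_Xn_sub_1 pz.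
move/(congr1 (fun p => p.[y^-1])).
rewrite horner_prod hornerD hornerN hornerXn hornerC => E.
have E2 : (\prod_(0 <= i < n) (y * (y^-1 - z ^+ i)) = y ^+ n * (y^-1 ^+ n - 1)).
  by rewrite big_split /= prodr_const_nat subn0 -E; congr (_ * _); apply: eq_bigr => i _; rewrite hornerXsubC.
rewrite mulrBr -exprMn mulfV // expr1n mulr1 in E2.
rewrite -E2; apply: eq_bigr => i _. by rewrite mulrBr mulfV.
Qed.

Lemma prod_eq (f : nat -> CC) n : \prod_(0 <= i < n) f i = cprod f n.
Proof. elim: n => [|n IH]; first by rewrite big_nil. by rewrite big_nat_recr //= IH. Qed.
Lemma pow_eq (x : CC) n : x ^+ n = cpow x n.
Proof. elim: n => [|n IH] //. by rewrite exprS IH. Qed.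

Lemma prim_intro (z : CC) n : (0 < n)%N -> cpow z n = RtoC R1 ->
  (forall i, (0 < i)%N -> (i < n)%N -> cpow z i <> RtoC R1) -> n.-primitive_root z.
Proof.
move=> n0 zn zi. apply/andP; split => //. apply/forallP => i.
rewrite unity_rootE pow_eq.
case: (eqVneq i.+1 n) => [E|ne].
  have -> : cpow z i.+1 = cpow z n by rewrite E.
  rewrite zn. by apply/eqP; apply/eqP.
apply/eqP/negbTE/eqP. apply: zi => //. by rewrite ltn_neqAle ne ltn_ord.
Qed.

Lemma cprod_sub (z y : CC) n : (0 < n)%N -> cpow z n = RtoC R1 ->
  (forall i, (0 < i)%N -> (i < n)%N -> cpow z i <> RtoC R1) ->
  cprod (fun i => Cminus (RtoC R1) (Cmult y (cpow z i))) n = Cminus (RtoC R1) (cpow y n).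
Proof.
move=> n0 zn zi. have pz := @prim_intro z n n0 zn zi.
have H := @prod_sub z y n pz. rewrite prod_eq in H.
transitivity (cprod (fun i => (1 - y * z ^+ i)) n).
  f_equal. apply: functional_extensionality => i. rewrite -(pow_eq z i). reflexivity.
rewrite H -(pow_eq y n). reflexivity.
Qed.
Lemma cprod_sub2 (z y : C) n : (0 < n)%coq_nat -> cpow z n = RtoC R1 ->
  (forall i, (0 < i)%coq_nat -> (i < n)%coq_nat -> cpow z i <> RtoC R1) ->
  cprod (fun i => Cminus (RtoC R1) (Cmult y (cpow z i))) n = Cminus (RtoC R1) (cpow y n).
Proof. move=> /ltP n0 zn zi. apply: (@cprod_sub z y n n0 zn) => i /ltP a /ltP b; exact: zi. Qed.
End MC.

Lemma C_neq (x : C) : 0 < Cmod x -> x <> RtoC 0.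
Proof. intros H E. rewrite E, Cmod_0 in H. lra. Qed.

Lemma cpow_add x a b : cpow x (a + b) = Cmult (cpow x a) (cpow x b).
Proof.
  induction a as [|a IH]; simpl.
  - rewrite Cmult_1_l. reflexivity.
  - rewrite IH, Cmult_assoc. reflexivity.
Qed.

Lemma cpow_mul x a b : cpow x (a * b) = cpow (cpow x a) b.
Proof.
  induction b as [|b IH]; simpl.
  - rewrite Nat.mul_0_r. reflexivity.
  - rewrite Nat.mul_succ_r, cpow_add, IH, Cmult_comm. reflexivity.
Qed.

Lemma cpow_multC a b n : cpow (Cmult a b) n = Cmult (cpow a n) (cpow b n).
Proof.
  induction n as [|n IH]; simpl.
  - apply injective_projections; simpl; ring.
  - rewrite IH. 
    transitivity (Cmult (Cmult a (cpow a n)) (Cmult b (cpow b n))); [|reflexivity].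
    rewrite <- !Cmult_assoc. f_equal. rewrite !Cmult_assoc. f_equal. apply Cmult_comm.
Qed.

Lemma Cmod_cpow x n : Cmod (cpow x n) = Cmod x ^ n.
Proof.
  induction n as [|n IH]; simpl.
  - apply Cmod_1.
  - rewrite Cmod_mult, IH. reflexivity.
Qed.

Lemma cpow_one n : cpow (RtoC 1) n = RtoC 1.
Proof. induction n as [|n IH]; simpl; [reflexivity|]. rewrite IH, Cmult_1_l. reflexivity. Qed.

Lemma cexp_add a b : cexp (Cplus a b) = Cmult (cexp a) (cexp b).
Proof.
  unfold cexp. destruct a as [a1 a2], b as [b1 b2]. simpl.
  rewrite exp_plus, cos_plus, sin_plus.
  apply injective_projections; simpl; ring.
Qed.

Lemma cexp_0 : cexp (RtoC 0) = RtoC 1.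
Proof.
  unfold cexp. simpl. rewrite exp_0, cos_0, sin_0.
  apply injective_projections; simpl; ring.
Qed.

Lemma cexp_ext a b : fst a = fst b -> snd a = snd b -> cexp a = cexp b.
Proof. intros H1 H2. unfold cexp. rewrite H1, H2. reflexivity. Qed.

Lemma cpow_cexp a n : cpow (cexp a) n = cexp (Cmult (RtoC (INR n)) a).
Proof.
  induction n as [|n IH].
  - simpl. rewrite <- cexp_0. apply cexp_ext; simpl; ring.
  - simpl cpow. rewrite IH, <- cexp_add. apply cexp_ext; rewrite S_INR; simpl; ring.
Qed.

Lemma Cmod_cexp a : Cmod (cexp a) = exp (fst a).
Proof.
  unfold cexp, Cmod. cbn [fst snd].
  replace ((exp (fst a) * cos (snd a)) ^ 2 + (exp (fst a) * sin (snd a)) ^ 2)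
    with (exp (fst a) ^ 2) by (pose proof (sin2_cos2 (snd a)) as HH; unfold Rsqr in HH; nra).
  apply sqrt_pow2. left. apply exp_pos.
Qed.

Lemma Qof_eq s : Qof s = cexp (- (2 * PI * snd s), 2 * PI * fst s).
Proof. unfold Qof. apply cexp_ext; simpl; ring. Qed.

Lemma Qof_ext a b : fst a = fst b -> snd a = snd b -> Qof a = Qof b.
Proof. intros H1 H2. rewrite !Qof_eq, H1, H2. reflexivity. Qed.

Lemma Qof_add a b : Qof (Cplus a b) = Cmult (Qof a) (Qof b).
Proof. rewrite !Qof_eq, <- cexp_add. apply cexp_ext; simpl; ring. Qed.

Lemma Qof_nat n a : Qof (Cmult (RtoC (INR n)) a) = cpow (Qof a) n.
Proof. rewrite !Qof_eq, cpow_cexp. apply cexp_ext; simpl; ring. Qed.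

Lemma Cmod_Qof s : Cmod (Qof s) = exp (- (2 * PI * snd s)).
Proof. rewrite Qof_eq, Cmod_cexp. reflexivity. Qed.

Lemma Cmod_Qof_lt s : 0 < snd s -> 0 < Cmod (Qof s) < 1.
Proof.
  intros H. rewrite Cmod_Qof. split; [apply exp_pos|].
  rewrite <- exp_0. apply exp_increasing. pose proof PI_RGT_0. nra.
Qed.

Lemma RtoC_INR_neq n : (0 < n)%nat -> RtoC (INR n) <> RtoC 0.
Proof. intros H E. injection E. apply not_0_INR. lia. Qed.

Definition g (x : C) (m : nat) : R := Jfun (cpow x m).

Lemma ln_le_sub x : 0 < x -> ln x <= x - 1.
Proof.
  intros Hx. destruct (Req_dec x 1) as [E|E].
  - subst. rewrite ln_1. lra.
  - left. assert (H := exp_ineq1 (x - 1)). 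
    rewrite <- (ln_exp (x - 1)). apply ln_increasing; [assumption|]. 
    assert (HH := H ltac:(lra)). lra.
Qed.

Lemma ln_1_bound y : Cmod y < 1 ->
  Rabs (ln (Cmod (Cminus (RtoC 1) y))) <= Cmod y / (1 - Cmod y).
Proof.
  intros Hy. pose proof (Cmod_ge_0 y) as Ht. set (t := Cmod y) in *.
  assert (Hu : Cmod (Cminus (RtoC 1) y) <= 1 + t).
  { unfold Cminus. eapply Rle_trans; [apply Cmod_triangle|]. rewrite Cmod_opp, Cmod_1. unfold t. lra. }
  assert (Hl : 1 - t <= Cmod (Cminus (RtoC 1) y)).
  { assert (E : RtoC 1 = Cplus (Cminus (RtoC 1) y) y).
    { unfold Cminus. rewrite <- Cplus_assoc, (Cplus_comm (Copp y)), Cplus_opp_r, Cplus_0_r. reflexivity. }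
    pose proof (Cmod_triangle (Cminus (RtoC 1) y) y) as T. rewrite <- E, Cmod_1 in T. unfold t. lra. }
  assert (L1 : ln (Cmod (Cminus (RtoC 1) y)) <= t).
  { eapply Rle_trans. apply ln_le; [lra|exact Hu]. 
    pose proof (ln_le_sub (1 + t)). lra. }
  assert (L2 : - (t / (1 - t)) <= ln (Cmod (Cminus (RtoC 1) y))).
  { apply Rle_trans with (ln (1 - t)); [|apply ln_le; [lra|exact Hl]].
    pose proof (ln_le_sub (/ (1 - t))) as H2. rewrite ln_Rinv in H2 by lra.
    assert (0 < / (1 - t)) by (apply Rinv_0_lt_compat; lra).
    assert (/ (1 - t) - 1 = t / (1 - t)) by (field; lra). lra. }
  assert (t <= t / (1 - t)).
  { unfold Rdiv. assert (0 < / (1 - t)) by (apply Rinv_0_lt_compat; lra).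
    assert ((1 - t) * / (1 - t) = 1) by (field; lra). nra. }
  apply Rabs_le. lra.
Qed.

Lemma pow_le1 x n : 0 <= x < 1 -> x ^ n <= 1.
Proof. intros H. destruct n. simpl; lra. left. apply pow_lt_1_compat; [exact H|lia]. Qed.

Lemma g_bound x m : 0 < Cmod x < 1 ->
  Rabs (g x m) <= (- ln (Cmod x) / (1 - Cmod x)) * (INR m * Cmod x ^ m).
Proof.
  intros [H0 H1]. unfold g, Jfun. set (r := Cmod x) in *.
  assert (Hlr : ln r < 0) by (rewrite <- ln_1; apply ln_increasing; lra).
  destruct m as [|m].
  - simpl. rewrite Cmod_1, ln_1, Rmult_0_l, Rabs_R0. simpl. lra.
  - rewrite Cmod_cpow. fold r. rewrite ln_pow by lra. rewrite Rabs_mult.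
    assert (Hr1 : r ^ S m <= r).
    { change (r ^ S m) with (r * r ^ m). assert (r ^ m <= 1) by (apply pow_le1; lra). nra. }
    assert (Hr0 : 0 < r ^ S m) by (apply pow_lt; lra).
    assert (Hc : Cmod (cpow x (S m)) < 1) by (rewrite Cmod_cpow; fold r; lra).
    pose proof (ln_1_bound (cpow x (S m)) Hc) as B. rewrite Cmod_cpow in B. fold r in B.
    assert (Hn : 0 < INR (S m)) by (apply lt_0_INR; lia).
    rewrite Rabs_mult, Rabs_pos_eq by lra. rewrite Rabs_left by lra.
    assert (B2 : r ^ S m / (1 - r ^ S m) <= r ^ S m / (1 - r)).
    { unfold Rdiv. apply Rmult_le_compat_l; [lra|]. apply Rinv_le_contravar; lra. }
    assert (E : - ln r / (1 - r) * (INR (S m) * r ^ S m) = INR (S m) * - ln r * (r ^ S m / (1 - r)))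
      by (field; lra).
    rewrite E. apply Rmult_le_compat_l; [nra|]. lra.
Qed.

Lemma ex_series_mr r : 0 < r < 1 -> ex_series (fun m => INR m * r ^ m).
Proof.
  intros Hr. apply ex_series_incr_1.
  apply ex_series_Rabs.
  apply (ex_series_DAlembert _ (r * (1 + 0))); [lra| |].
  - intros n. assert (0 < INR (S n)) by (apply lt_0_INR; lia).
    assert (0 < r ^ S n) by (apply pow_lt; lra). nra.
  - apply is_lim_seq_ext with (fun n => r * (1 + / INR (S n))).
    + intros n. assert (0 < INR (S n)) by (apply lt_0_INR; lia).
      assert (0 < r ^ S n) by (apply pow_lt; lra).
      symmetry. rewrite Rabs_pos_eq.
      * rewrite (S_INR (S n)). change (r ^ S (S n)) with (r * r ^ S n). field. split; lra.
      * unfold Rdiv; apply Rmult_le_pos; [apply Rmult_le_pos; [apply pos_INR|apply pow_le; lra] | left; apply Rinv_0_lt_compat; nra].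
    + apply is_lim_seq_mult'; [apply is_lim_seq_const|].
      apply is_lim_seq_plus'; [apply is_lim_seq_const|].
      assert (H := is_lim_seq_inv _ _ (proj1 (is_lim_seq_incr_1 INR p_infty) is_lim_seq_INR)).
      apply H. discriminate.
Qed.

Lemma ex_series_abs_g x : 0 < Cmod x < 1 -> ex_series (fun m => Rabs (g x m)).
Proof.
  intros Hx.
  apply (@ex_series_le R_AbsRing R_CompleteNormedModule) with (fun m => (- ln (Cmod x) / (1 - Cmod x)) * (INR m * Cmod x ^ m)).
  - intros n. change (Rabs (Rabs (g x n)) <= - ln (Cmod x) / (1 - Cmod x) * (INR n * Cmod x ^ n)).
    rewrite Rabs_Rabsolu. apply g_bound; exact Hx.
  - apply ex_series_scal_l with (c := (- ln (Cmod x) / (1 - Cmod x))) (a := fun m => INR m * Cmod x ^ m).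
    apply ex_series_mr; exact Hx.
Qed.

Lemma ex_dom x u : 0 < Cmod x < 1 -> (forall m, Rabs (u m) <= Rabs (g x m)) -> ex_series u.
Proof.
  intros Hx H. apply (@ex_series_le R_AbsRing R_CompleteNormedModule) with (fun m => Rabs (g x m)).
  - intros n. change (Rabs (u n) <= Rabs (g x n)). apply H.
  - apply ex_series_abs_g; exact Hx.
Qed.

Lemma is_series_lim (u : nat -> R) l : is_series u l <-> is_lim_seq (sum_f_R0 u) l.
Proof.
  split; intros H.
  - apply is_lim_seq_ext with (sum_n u). intros n; apply sum_n_Reals. exact H.
  - assert (H' : is_lim_seq (sum_n u) l).
    { apply is_lim_seq_ext with (sum_f_R0 u). intros n; symmetry; apply sum_n_Reals. exact H. }
    exact H'.
Qed.

Section ZI.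
Variables (d r0 : nat) (u v : nat -> R).
Hypothesis Hd : (0 < d)%nat.
Hypothesis Hr : (r0 < d)%nat.
Hypothesis Huv : forall n, u (d * n + r0)%nat = v n.
Hypothesis Hu0 : forall m, (forall n, m <> (d * n + r0)%nat) -> u m = 0.

Lemma ZI_a m : (m < r0)%nat -> sum_f_R0 u m = 0.
Proof.
  induction m as [|m IH]; intros Hm.
  - simpl. apply Hu0. intros n. nia.
  - simpl. rewrite IH by lia. rewrite Hu0. ring. intros n. nia.
Qed.

Lemma ZI_s n s : (s < d)%nat -> sum_f_R0 u (d * n + r0 + s) = sum_f_R0 u (d * n + r0).
Proof.
  induction s as [|s IH]; intros Hs.
  - rewrite Nat.add_0_r. reflexivity.
  - replace (d * n + r0 + S s)%nat with (S (d * n + r0 + s)) by lia. simpl.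
    rewrite IH by lia. rewrite Hu0. ring. intros n' E.
    destruct (Nat.le_gt_cases n' n) as [Hn|Hn].
    + pose proof (Nat.mul_le_mono_l _ _ d Hn). lia.
    + assert (HH : (S n <= n')%nat) by lia. pose proof (Nat.mul_le_mono_l _ _ d HH). rewrite Nat.mul_succ_r in *. lia.
Qed.

Lemma ZI_b n : sum_f_R0 u (d * n + r0) = sum_f_R0 v n.
Proof.
  induction n as [|n IH].
  - destruct (Nat.eq_dec r0 0) as [E0|E0].
    + rewrite E0. simpl. rewrite <- Huv. rewrite Nat.mul_0_r, E0. reflexivity.
    + replace (d * 0 + r0)%nat with (S (r0 - 1)) by lia. simpl.
      rewrite ZI_a by lia. rewrite <- Huv. rewrite Rplus_0_l. f_equal. lia.
  - replace (d * S n + r0)%nat with (S (d * n + r0 + (d - 1))) by nia. simpl.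
    rewrite ZI_s by lia. rewrite IH. f_equal. rewrite <- Huv. f_equal. nia.
Qed.

Lemma ZI_iff l : is_series u l <-> is_series v l.
Proof.
  rewrite !is_series_lim. split; intros H.
  - apply is_lim_seq_ext with (fun n => sum_f_R0 u (d * n + r0)).
    + intros n. apply ZI_b.
    + apply (is_lim_seq_subseq (sum_f_R0 u) l (fun n => d * n + r0)%nat); [|exact H].
      intros P [M HM]. exists M. intros n Hn. apply HM. nia.
  - apply is_lim_seq_ext_loc with (fun m => sum_f_R0 v ((m - r0) / d)).
    + exists r0. intros m Hm.
      rewrite <- ZI_b.
      assert (Hdm := Nat.div_mod_eq (m - r0) d).
      assert (Hmd := Nat.mod_upper_bound (m - r0) d ltac:(lia)).
      rewrite <- (ZI_s _ ((m - r0) mod d)) by exact Hmd. f_equal. lia.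
    + apply (is_lim_seq_subseq (sum_f_R0 v) l (fun m => (m - r0) / d)%nat); [|exact H].
      intros P [M HM]. exists (d * M + r0)%nat. intros n Hn. apply HM.
      apply Nat.div_le_lower_bound; lia.
Qed.
End ZI.

Definition Ind (N r : nat) (f : nat -> R) (m : nat) : R :=
  if Nat.eqb (m mod N) r then f m else 0.

Lemma Ind_bound N r f m : Rabs (Ind N r f m) <= Rabs (f m).
Proof. unfold Ind. destruct (Nat.eqb (m mod N) r). lra. rewrite Rabs_R0. apply Rabs_pos. Qed.

Lemma mod_lin N n r : (r < N)%nat -> ((N * n + r) mod N = r)%nat.
Proof.
  intros H. symmetry. apply (Nat.mod_unique _ _ n); lia.
Qed.

Lemma Ind_ZI N r f : (0 < N)%nat -> (r < N)%nat -> ex_series (Ind N r f) ->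
  Series (fun n => f (N * n + r)%nat) = Series (Ind N r f) /\ ex_series (fun n => f (N * n + r)%nat).
Proof.
  intros HN Hr [l Hl].
  assert (H : is_series (fun n => f (N * n + r)%nat) l).
  { apply (ZI_iff N r (Ind N r f) _ HN Hr).
    - intros n. unfold Ind. rewrite mod_lin by lia. rewrite Nat.eqb_refl. reflexivity.
    - intros m Hm. unfold Ind. destruct (Nat.eqb (m mod N) r) eqn:E; [|reflexivity].
      apply Nat.eqb_eq in E. exfalso. apply (Hm (m / N)%nat).
      rewrite <- E. apply Nat.div_mod_eq.
    - exact Hl. }
  split.
  - rewrite (is_series_unique _ _ H), (is_series_unique _ _ Hl). reflexivity.
  - exists l. exact H.
Qed.

Lemma ex_Ind x N r : 0 < Cmod x < 1 -> ex_series (Ind N r (g x)).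
Proof. intros Hx. apply (ex_dom x); [exact Hx|]. intros m. apply Ind_bound. Qed.

Lemma JSIG s x N k : (1 <= k)%nat -> (k < N)%nat -> Qof s = cpow x N -> 0 < Cmod x < 1 ->
  Jsigma s (cpow x k) = Series (Ind N k (g x)) - Series (Ind N (N - k) (g x))
    + 1 / 3 * (INR N * ln (Cmod x)) ^ 2 * B3 (INR k / INR N).
Proof.
  intros Hk1 Hk2 HQ Hx.
  assert (Hx0 : x <> RtoC 0) by (apply C_neq; lra).
  assert (Hxk : cpow x k <> RtoC 0) by (apply C_neq; rewrite Cmod_cpow; apply pow_lt; lra).
  unfold Jsigma. cbv zeta. rewrite HQ.
  destruct (Ind_ZI N k (g x) ltac:(lia) ltac:(lia) (ex_Ind x N k Hx)) as [E1 _].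
  destruct (Ind_ZI N (N - k) (g x) ltac:(lia) ltac:(lia) (ex_Ind x N (N - k) Hx)) as [E2 _].
  rewrite <- E1, <- E2.
  assert (Hl : ln (Cmod x) < 0) by (rewrite <- ln_1; apply ln_increasing; lra).
  assert (HNr : 0 < INR N) by (apply lt_0_INR; lia).
  rewrite !Cmod_cpow, !ln_pow by lra.
  replace (INR k * ln (Cmod x) / (INR N * ln (Cmod x))) with (INR k / INR N) by (field; lra).
  f_equal. f_equal.
  - apply Series_ext. intros n. unfold g. rewrite <- cpow_mul, <- cpow_add.
    f_equal. f_equal. lia.
  - apply Series_ext. intros n. unfold g. rewrite <- cpow_mul.
    replace (N * S n)%nat with (k + (N * n + (N - k)))%nat by nia.
    rewrite cpow_add, Cmult_assoc, Cinv_l, Cmult_1_l by exact Hxk. reflexivity.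
Qed.

Lemma cprod_pos f n : (forall j, (j < n)%nat -> f j <> RtoC 0) -> 0 < Cmod (cprod f n).
Proof.
  induction n as [|n IH]; intros H; simpl.
  - rewrite Cmod_1. lra.
  - rewrite Cmod_mult. apply Rmult_lt_0_compat.
    + apply IH. intros j Hj. apply H. lia.
    + apply Cmod_gt_0. apply H. lia.
Qed.

Lemma sum_ln_cprod f n : (forall j, (j <= n)%nat -> f j <> RtoC 0) ->
  sum_f_R0 (fun j => ln (Cmod (f j))) n = ln (Cmod (cprod f (S n))).
Proof.
  induction n as [|n IH]; intros H.
  - simpl. rewrite Cmult_1_l. reflexivity.
  - simpl sum_f_R0. rewrite IH by (intros j Hj; apply H; lia).
    change (cprod f (S (S n))) with (Cmult (cprod f (S n)) (f (S n))).
    rewrite Cmod_mult, ln_mult.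
    + reflexivity.
    + apply cprod_pos. intros j Hj. apply H. lia.
    + apply Cmod_gt_0. apply H. lia.
Qed.

Section Dist.
Variables (p : nat) (w z : C).
Hypothesis Hp : (0 < p)%nat.
Hypothesis Hw : 0 < Cmod w < 1.
Hypothesis Hz1 : forall t, (t mod p = 0)%nat -> cpow z t = RtoC 1.
Hypothesis Hz2 : forall t, (t mod p <> 0)%nat -> cpow z t <> RtoC 1.
Hypothesis Hzm : Cmod z = 1.
Hypothesis Hprime : forall a b, ((a * b) mod p = 0)%nat -> (a mod p = 0)%nat \/ (b mod p = 0)%nat.

Lemma DIST m :
  sum_f_R0 (fun j => INR p * g (Cmult w (cpow z j)) m) (p - 1)
  = if Nat.eqb (m mod p) 0 then INR p ^ 2 * g (cpow w p) (m / p) else g (cpow w p) m.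
Proof.
  assert (Hterm : forall j, cpow (Cmult w (cpow z j)) m = Cmult (cpow w m) (cpow (cpow z m) j)).
  { intros j. rewrite cpow_multC, <- !cpow_mul, Nat.mul_comm. reflexivity. }
  destruct (Nat.eqb (m mod p) 0) eqn:E.
  - apply Nat.eqb_eq in E.
    assert (Hm : (p * (m / p) = m)%nat) by (pose proof (Nat.div_mod_eq m p); lia).
    rewrite sum_eq with (Bn := fun _ => INR p * g w m).
    + rewrite sum_cte. replace (S (p - 1)) with p by lia.
      unfold g at 2. rewrite <- cpow_mul, Hm. fold (g w m). simpl. ring.
    + intros j _. unfold g. rewrite Hterm, <- cpow_mul, Hz1.
      * rewrite Cmult_1_r. reflexivity.
      * rewrite Nat.mul_mod, E by lia. rewrite Nat.mul_0_l. apply Nat.mod_0_l. lia.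
  - apply Nat.eqb_neq in E.
    assert (Hm0 : m <> 0%nat) by (intros ->; apply E; apply Nat.mod_0_l; lia).
    set (y := cpow w m).
    assert (Hy : Cmod y = Cmod w ^ m) by apply Cmod_cpow.
    assert (Hy1 : 0 < Cmod y < 1).
    { rewrite Hy. split. apply pow_lt; lra. apply pow_lt_1_compat; [lra|lia]. }
    assert (Hzmj : forall j, Cmod (cpow (cpow z m) j) = 1).
    { intros j. rewrite !Cmod_cpow, Hzm, !pow1. reflexivity. }
    assert (Hf : forall j, Cminus (RtoC 1) (Cmult y (cpow (cpow z m) j)) <> RtoC 0).
    { intros j H0. assert (H1 : Cmult y (cpow (cpow z m) j) = RtoC 1).
      { rewrite <- (Cplus_0_l (Cmult y _)), <- H0. unfold Cminus.
        rewrite <- Cplus_assoc, (Cplus_comm (Copp _)), Cplus_opp_r, Cplus_0_r. reflexivity. }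
      assert (H2 := f_equal Cmod H1). rewrite Cmod_mult, Hzmj, Cmod_1 in H2. lra. }
    rewrite sum_eq with (Bn := fun j => ln (Cmod (Cminus (RtoC 1) (Cmult y (cpow (cpow z m) j)))) * (INR p * ln (Cmod y))).
    + rewrite <- scal_sum, sum_ln_cprod by (intros j _; apply Hf).
      replace (S (p - 1)) with p by lia.
      assert (HP : cprod (fun j => Cminus (RtoC 1) (Cmult y (cpow (cpow z m) j))) p
                   = Cminus (RtoC 1) (cpow y p)).
      { apply MC.cprod_sub2.
        - exact Hp.
        - rewrite <- cpow_mul. apply Hz1. apply Nat.Div0.mod_mul.
        - intros i Hi1 Hi2. rewrite <- cpow_mul. apply Hz2. intros Hc.
          destruct (Hprime _ _ Hc) as [Hc'|Hc']; [exact (E Hc')|].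
          rewrite Nat.mod_small in Hc' by lia. lia. }
      rewrite HP. unfold y. rewrite <- cpow_mul, Nat.mul_comm, cpow_mul.
      unfold g, Jfun. rewrite !Cmod_cpow, !ln_pow by (try apply pow_lt; lra).
      ring.
    + intros j _. unfold g. rewrite Hterm. fold y.
      unfold Jfun. rewrite Cmod_mult, Hzmj, Rmult_1_r. ring.
Qed.
End Dist.

Lemma Cinv_RtoC x : x <> 0 -> Cinv (RtoC x) = RtoC (/ x).
Proof. intros H. unfold Cinv, RtoC. simpl. apply injective_projections; simpl; field; exact H. Qed.

Lemma zeta_pow p t : (0 < p)%nat ->
  cpow (Qof (Cinv (RtoC (INR p)))) t = (cos (2 * PI * (INR t / INR p)), sin (2 * PI * (INR t / INR p))).
Proof.
  intros Hp. assert (HP : INR p <> 0) by (apply not_0_INR; lia).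
  rewrite Cinv_RtoC by exact HP. rewrite <- Qof_nat, Qof_eq.
  rewrite (cexp_ext _ (0, 2 * PI * (INR t / INR p))) by (simpl; unfold Rdiv; ring).
  unfold cexp. simpl. rewrite exp_0, !Rmult_1_l. reflexivity.
Qed.

Lemma zeta_p p : (0 < p)%nat -> cpow (Qof (Cinv (RtoC (INR p)))) p = RtoC 1.
Proof.
  intros Hp. rewrite zeta_pow by exact Hp.
  replace (INR p / INR p) with 1 by (field; apply not_0_INR; lia).
  rewrite Rmult_1_r, cos_2PI, sin_2PI. reflexivity.
Qed.

Lemma zeta_1 p t : (0 < p)%nat -> (t mod p = 0)%nat -> cpow (Qof (Cinv (RtoC (INR p)))) t = RtoC 1.
Proof.
  intros Hp Ht. assert (E : t = (p * (t / p))%nat) by (pose proof (Nat.div_mod_eq t p); lia).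
  rewrite E, cpow_mul, zeta_p, cpow_one by exact Hp. reflexivity.
Qed.

Lemma zeta_2 p t : (0 < p)%nat -> (t mod p <> 0)%nat -> cpow (Qof (Cinv (RtoC (INR p)))) t <> RtoC 1.
Proof.
  intros Hp Ht. assert (E : t = (p * (t / p) + t mod p)%nat) by apply Nat.div_mod_eq.
  assert (Hb := Nat.mod_upper_bound t p ltac:(lia)).
  rewrite E, cpow_add, cpow_mul, zeta_p, cpow_one, Cmult_1_l by exact Hp.
  set (b := (t mod p)%nat) in *.
  rewrite zeta_pow by exact Hp. unfold RtoC. intros H. injection H as Hc Hs.
  assert (HP : 0 < INR p) by (apply lt_0_INR; lia).
  assert (Hb0 : 0 < INR b) by (apply lt_0_INR; lia).
  assert (Hbp : INR b < INR p) by (apply lt_INR; lia).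
  assert (H1 : 0 < INR b / INR p) by (apply Rdiv_lt_0_compat; lra).
  assert (H2 : INR b / INR p < 1) by (apply Rmult_lt_reg_r with (INR p); [lra|]; field_simplify; lra).
  pose proof PI_RGT_0.
  set (th := 2 * PI * (INR b / INR p)) in *.
  destruct (Rtotal_order th PI) as [Hl|[He|Hg]].
  - assert (0 < sin th) by (apply sin_gt_0; [unfold th; nra|exact Hl]). lra.
  - rewrite He, cos_PI in Hc. lra.
  - assert (sin th < 0) by (apply sin_lt_0; [exact Hg|unfold th; nra]). lra.
Qed.

Lemma Cmod_zeta p : (0 < p)%nat -> Cmod (Qof (Cinv (RtoC (INR p)))) = 1.
Proof.
  intros Hp. rewrite Cmod_Qof, Cinv_RtoC by (apply not_0_INR; lia). simpl.
  replace (- (2 * PI * 0)) with 0 by ring. apply exp_0.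
Qed.

Lemma prime_nat p a b : prime (Z.of_nat p) -> ((a * b) mod p = 0)%nat ->
  (a mod p = 0)%nat \/ (b mod p = 0)%nat.
Proof.
  intros Hp H. pose proof (prime_ge_2 _ Hp) as H2.
  assert (Hd : (Z.of_nat p | Z.of_nat a * Z.of_nat b)%Z).
  { apply Z.mod_divide; [lia|]. rewrite <- Nat2Z.inj_mul, <- Nat2Z.inj_mod, H. reflexivity. }
  destruct (prime_mult _ Hp _ _ Hd) as [Ha|Hb]; [left|right].
  - apply Zdivide_mod in Ha. rewrite <- Nat2Z.inj_mod in Ha. lia.
  - apply Zdivide_mod in Hb. rewrite <- Nat2Z.inj_mod in Hb. lia.
Qed.

Lemma snd_div a x : x <> 0 -> snd (Cdiv a (RtoC x)) = snd a / x.
Proof. intros H. unfold Cdiv, Cinv, Cmult, RtoC. simpl. field. exact H. Qed.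

Lemma sum_Series (F : nat -> nat -> R) n : (forall j, ex_series (F j)) ->
  sum_f_R0 (fun j => Series (F j)) n = Series (fun m => sum_f_R0 (fun j => F j m) n)
  /\ ex_series (fun m => sum_f_R0 (fun j => F j m) n).
Proof.
  intros H. induction n as [|n [IH1 IH2]].
  - simpl. split; [reflexivity|apply H].
  - simpl. split.
    + rewrite IH1, Series_plus by (auto). reflexivity.
    + apply (@ex_series_plus R_AbsRing R_NormedModule); auto.
Qed.

Lemma Series_zero (u : nat -> R) : (forall m, u m = 0) -> Series u = 0.
Proof.
  intros H. rewrite (Series_ext _ (fun m => 0 * 0)) by (intros; rewrite H; ring).
  rewrite Series_scal_l. ring.
Qed.

Section Compress.
Variables (p N : nat) (q : C).
Hypothesis Hp : (0 < p)%nat.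
Hypothesis HN : (0 < N)%nat.
Hypothesis Hq : 0 < Cmod q < 1.

Lemma Dcomp r :
  Series (fun m => if andb (Nat.eqb (m mod N) r) (Nat.eqb (m mod p) 0) then g q m else 0)
  = Series (fun m' => if Nat.eqb ((p * m') mod N) r then g (cpow q p) m' else 0)
  /\ ex_series (fun m => if andb (Nat.eqb (m mod N) r) (Nat.eqb (m mod p) 0) then g q m else 0).
Proof.
  set (u := fun m => if andb (Nat.eqb (m mod N) r) (Nat.eqb (m mod p) 0) then g q m else 0).
  assert (Hu : ex_series u).
  { apply (ex_dom q); [exact Hq|]. intros m. unfold u.
    destruct (andb _ _). lra. rewrite Rabs_R0. apply Rabs_pos. }
  split; [|exact Hu].
  destruct Hu as [l Hl].
  assert (Hv : is_series (fun m' => if Nat.eqb ((p * m') mod N) r then g (cpow q p) m' else 0) l).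
  { apply (ZI_iff p 0 u _ Hp Hp).
    - intros n. unfold u. rewrite (mod_lin p n 0 Hp).
      rewrite Nat.add_0_r. simpl. rewrite Bool.andb_true_r. unfold g. rewrite cpow_mul. reflexivity.
    - intros m Hm. unfold u. destruct (Nat.eqb (m mod p) 0) eqn:E; [|rewrite Bool.andb_false_r; reflexivity].
      apply Nat.eqb_eq in E. exfalso. apply (Hm (m / p)%nat).
      pose proof (Nat.div_mod_eq m p). lia.
    - exact Hl. }
  rewrite (is_series_unique _ _ Hl). symmetry. apply is_series_unique. exact Hv.
Qed.

Lemma Ecomp r :
  Series (fun m => if andb (Nat.eqb (m mod N) r) (Nat.eqb (m mod p) 0) then g q (m / p) else 0)
  = Series (fun m' => if Nat.eqb ((p * m') mod N) r then g q m' else 0)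
  /\ ex_series (fun m => if andb (Nat.eqb (m mod N) r) (Nat.eqb (m mod p) 0) then g q (m / p) else 0).
Proof.
  set (v := fun m' => if Nat.eqb ((p * m') mod N) r then g q m' else 0).
  assert (Hv : ex_series v).
  { apply (ex_dom q); [exact Hq|]. intros m. unfold v.
    destruct (Nat.eqb _ _). lra. rewrite Rabs_R0. apply Rabs_pos. }
  destruct Hv as [l Hl].
  assert (Hu : is_series (fun m => if andb (Nat.eqb (m mod N) r) (Nat.eqb (m mod p) 0) then g q (m / p) else 0) l).
  { apply (ZI_iff p 0 _ v Hp Hp).
    - intros n. unfold v. rewrite Nat.add_0_r. rewrite <- (Nat.add_0_r (p * n)) at 2. rewrite (mod_lin p n 0 Hp).
      simpl. rewrite Bool.andb_true_r. rewrite Nat.mul_comm, Nat.div_mul by lia. rewrite Nat.mul_comm. reflexivity.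
    - intros m Hm. destruct (Nat.eqb (m mod p) 0) eqn:E; [|rewrite Bool.andb_false_r; reflexivity].
      apply Nat.eqb_eq in E. exfalso. apply (Hm (m / p)%nat).
      pose proof (Nat.div_mod_eq m p). lia.
    - exact Hl. }
  split.
  - transitivity l; [apply is_series_unique; exact Hu | symmetry; apply is_series_unique; exact Hl].
  - exists l. exact Hu.
Qed.
End Compress.

Lemma res1 p N m : (0 < N)%nat -> (p mod N = 1)%nat -> ((p * m) mod N = m mod N)%nat.
Proof.
  intros HN H. rewrite Nat.mul_mod, H by lia. rewrite Nat.mul_1_l. apply Nat.mod_mod. lia.
Qed.

Lemma res0 p N m : (0 < N)%nat -> (p mod N = 0)%nat -> ((p * m) mod N = 0)%nat.
Proof.
  intros HN H. rewrite Nat.mul_mod, H by lia. simpl. apply Nat.mod_0_l. lia.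
Qed.

Lemma resm p N m r : (0 < N)%nat -> (p mod N = N - 1)%nat -> (1 <= r)%nat -> (r < N)%nat ->
  Nat.eqb ((p * m) mod N) r = Nat.eqb (m mod N) (N - r).
Proof.
  intros HN H Hr1 Hr2. rewrite Nat.mul_mod, H by lia.
  assert (Hs := Nat.mod_upper_bound m N ltac:(lia)).
  set (s := (m mod N)%nat) in *.
  destruct (Nat.eq_dec s 0) as [E|E].
  - rewrite E, Nat.mul_0_r, Nat.mod_0_l by lia.
    destruct (Nat.eqb_spec 0 r); destruct (Nat.eqb_spec 0 (N - r)); lia.
  - assert (Hm : (((N - 1) * s) mod N = N - s)%nat).
    { symmetry. apply (Nat.mod_unique _ _ (s - 1)); [lia|]. nia. }
    rewrite Hm.
    destruct (Nat.eqb_spec (N - s) r); destruct (Nat.eqb_spec s (N - r)); lia.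
Qed.
Theorem mainTheorem15 (N k p : nat) (tau : C)
  (hN : (3 <= N)%nat) (hk1 : (1 <= k)%nat) (hk2 : (k <= N - 1)%nat)
  (hgcd : Nat.gcd N k = 1%nat)
  (hp : prime (Z.of_nat p)) (hodd : Nat.odd p = true)
  (hpN : Nat.modulo p N = 1%nat \/ Nat.modulo p N = (N - 1)%nat \/ Nat.modulo p N = 0%nat)
  (htau : 0 < snd tau) :
  let q := Qof tau in
  let qj := fun j : nat =>
    Qof (Cdiv (Cplus tau (RtoC (INR j))) (RtoC (INR p))) in
  (1 + chiN N p * INR p ^ 2) * Jsigma (Cmult (RtoC (INR N)) tau) (cpow q k)
  = sum_f_R0 (fun j => INR p *
        Jsigma (Cdiv (Cmult (RtoC (INR N)) (Cplus tau (RtoC (INR j)))) (RtoC (INR p)))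
               (cpow (qj j) k)) (p - 1)
    + chiN N p * Jsigma (Cmult (RtoC (INR (N * p))) tau) (cpow q (p * k)).
Proof.
  intros q qj.
  assert (Hqjdef : forall j, qj j = Qof (Cdiv (Cplus tau (RtoC (INR j))) (RtoC (INR p)))) by reflexivity.
  assert (Hqdef : q = Qof tau) by reflexivity.
  clearbody q qj.
  assert (Hp2 : (2 <= p)%nat) by (pose proof (prime_ge_2 _ hp); lia).
  assert (HP0 : INR p <> 0) by (apply not_0_INR; lia).
  assert (HPc : RtoC (INR p) <> RtoC 0) by (apply RtoC_INR_neq; lia).
  set (w := Qof (Cdiv tau (RtoC (INR p)))).
  set (z := Qof (Cinv (RtoC (INR p)))).
  assert (Hw : 0 < Cmod w < 1).
  { apply Cmod_Qof_lt. rewrite snd_div by exact HP0. apply Rdiv_lt_0_compat; [exact htau|apply lt_0_INR; lia]. }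
  assert (Hwq : cpow w p = q).
  { unfold w. rewrite Hqdef, <- Qof_nat. f_equal. field. exact HPc. }
  assert (Hqj : forall j, qj j = Cmult w (cpow z j)).
  { intros j. rewrite Hqjdef. unfold w, z. rewrite <- Qof_nat, <- Qof_add. f_equal. field. exact HPc. }
  assert (Hq : 0 < Cmod q < 1) by (rewrite Hqdef; apply Cmod_Qof_lt; exact htau).
  set (q' := cpow q p).
  assert (Hq' : 0 < Cmod q' < 1).
  { unfold q'. rewrite Cmod_cpow. split; [apply pow_lt; lra|apply pow_lt_1_compat; [lra|lia]]. }
  assert (Hqjm : forall j, Cmod (qj j) = Cmod w).
  { intros j. rewrite Hqj, Cmod_mult, Cmod_cpow. unfold z. rewrite Cmod_zeta, pow1 by lia. ring. }
  assert (Hlq : ln (Cmod q) = INR p * ln (Cmod w)).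
  { rewrite <- Hwq, Cmod_cpow, ln_pow by lra. reflexivity. }
  assert (Hlq' : ln (Cmod q') = INR p * ln (Cmod q)).
  { unfold q'. rewrite Cmod_cpow, ln_pow by lra. reflexivity. }
  rewrite (JSIG _ q N k hk1 ltac:(lia)) by (try exact Hq; rewrite Hqdef; apply Qof_nat).
  rewrite (cpow_mul q p k). fold q'.
  rewrite (JSIG _ q' N k hk1 ltac:(lia)).
  2:{ rewrite Qof_nat, <- Hqdef, Nat.mul_comm, cpow_mul. reflexivity. }
  2:{ exact Hq'. }
  set (Bw := 1 / 3 * (INR N * ln (Cmod w)) ^ 2 * B3 (INR k / INR N)).
  rewrite (sum_eq _ (fun j => (INR p * Series (Ind N k (g (qj j))) - INR p * Series (Ind N (N - k) (g (qj j)))) + INR p * Bw)).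
  2:{ intros j _. rewrite (JSIG _ (qj j) N k hk1 ltac:(lia)).
      - rewrite Hqjm. unfold Bw. ring.
      - rewrite Hqjdef, <- Qof_nat. f_equal. field. exact HPc.
      - rewrite Hqjm. exact Hw. }
  rewrite plus_sum, minus_sum, sum_cte.
  replace (INR (S (p - 1))) with (INR p) by (f_equal; lia).
  set (Hd := fun m => if Nat.eqb (m mod p) 0 then INR p ^ 2 * g q (m / p) else g q m).
  assert (HT : forall r, sum_f_R0 (fun j => INR p * Series (Ind N r (g (qj j)))) (p - 1) = Series (Ind N r Hd)).
  { intros r.
    rewrite (sum_eq _ (fun j => Series (fun m => INR p * Ind N r (g (qj j)) m))) by (intros; rewrite Series_scal_l; reflexivity).
    destruct (sum_Series (fun j m => INR p * Ind N r (g (qj j)) m) (p - 1)) as [E _].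
    { intros j. apply (ex_series_ext (fun m => scal (INR p) (Ind N r (g (qj j)) m))); [intros; reflexivity|].
      apply (@ex_series_scal_l R_AbsRing R_NormedModule). apply ex_Ind. rewrite Hqjm. exact Hw. }
    rewrite E. apply Series_ext. intros m. unfold Ind. destruct (Nat.eqb (m mod N) r).
    - rewrite (sum_eq _ (fun j => INR p * g (Cmult w (cpow z j)) m)) by (intros; rewrite Hqj; reflexivity).
      rewrite (DIST p w z ltac:(lia) Hw (fun t => zeta_1 p t ltac:(lia)) (fun t => zeta_2 p t ltac:(lia))
                 (Cmod_zeta p ltac:(lia)) (fun a b => prime_nat p a b hp)).
      rewrite Hwq. reflexivity.
    - rewrite (sum_eq _ (fun _ => 0)) by (intros; ring). rewrite sum_cte. ring. }
  rewrite !HT.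
  assert (HS : forall r, Series (Ind N r Hd) =
    Series (Ind N r (g q))
    - Series (fun m' => if Nat.eqb ((p * m') mod N) r then g q' m' else 0)
    + INR p ^ 2 * Series (fun m' => if Nat.eqb ((p * m') mod N) r then g q m' else 0)).
  { intros r.
    destruct (Dcomp p N q ltac:(lia) ltac:(lia) Hq r) as [ED XD].
    destruct (Ecomp p N q ltac:(lia) ltac:(lia) Hq r) as [EE XE].
    unfold q'. rewrite <- ED, <- EE.
    rewrite (Series_ext (Ind N r Hd) (fun m =>
       (Ind N r (g q) m - (if andb (Nat.eqb (m mod N) r) (Nat.eqb (m mod p) 0) then g q m else 0))
       + INR p ^ 2 * (if andb (Nat.eqb (m mod N) r) (Nat.eqb (m mod p) 0) then g q (m / p) else 0))).
    2:{ intros m. unfold Ind, Hd. destruct (Nat.eqb (m mod N) r); destruct (Nat.eqb (m mod p) 0); simpl; ring. }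
    assert (XI := ex_Ind q N r Hq).
    assert (XM : ex_series (fun m => Ind N r (g q) m - (if andb (Nat.eqb (m mod N) r) (Nat.eqb (m mod p) 0) then g q m else 0))).
    { apply (@ex_series_minus R_AbsRing R_NormedModule); assumption. }
    rewrite Series_plus; [|exact XM|].
    2:{ apply (ex_series_ext (fun m => scal (INR p ^ 2) (if andb (Nat.eqb (m mod N) r) (Nat.eqb (m mod p) 0) then g q (m / p) else 0))); [intros; reflexivity|].
        apply (@ex_series_scal_l R_AbsRing R_NormedModule). exact XE. }
    rewrite Series_minus by assumption. rewrite Series_scal_l. reflexivity. }
  rewrite !HS.
  unfold Bw. rewrite Hlq', Hlq.
  destruct hpN as [H1|[H1|H1]].
  - assert (Hc : chiN N p = 1) by (unfold chiN; rewrite H1; reflexivity).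
    assert (HC : forall r G, Series (fun m' => if Nat.eqb ((p * m') mod N) r then G m' else 0) = Series (Ind N r G)).
    { intros r G. apply Series_ext. intros m. unfold Ind. rewrite res1 by lia. reflexivity. }
    rewrite Hc, !HC. ring.
  - assert (Hc : chiN N p = -1).
    { unfold chiN. rewrite H1. destruct (Nat.eqb_spec (N - 1) 1); [lia|]. rewrite Nat.eqb_refl. reflexivity. }
    assert (HC : forall r G, (1 <= r)%nat -> (r < N)%nat ->
      Series (fun m' => if Nat.eqb ((p * m') mod N) r then G m' else 0) = Series (Ind N (N - r) G)).
    { intros r G Hr1 Hr2. apply Series_ext. intros m. unfold Ind. rewrite (resm p N m r) by lia. reflexivity. }
    rewrite Hc, !(HC k) by lia. rewrite !(HC (N - k)%nat) by lia.
    replace (N - (N - k))%nat with k by lia. ring.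
  - assert (Hc : chiN N p = 0).
    { unfold chiN. rewrite H1. destruct (Nat.eqb_spec 0 1); [lia|]. destruct (Nat.eqb_spec 0 (N - 1)); [lia|]. reflexivity. }
    assert (HC : forall r G, (1 <= r)%nat ->
      Series (fun m' => if Nat.eqb ((p * m') mod N) r then G m' else 0) = 0).
    { intros r G Hr1. apply Series_zero. intros m. rewrite res0 by lia. destruct (Nat.eqb_spec 0 r); [lia|]. reflexivity. }
    rewrite Hc, !(HC k) by lia. rewrite !(HC (N - k)%nat) by lia. ring.
Qed.
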